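(* Let $G$ be a group, $A$ an additive abelian group with a right $G$-action by group automorphisms, $n\in\mathbb Z_+$ and $a\in\mathcal P_n(G,A)$. Then $D^na$ is an $n$-cocycle of $G$ with values in $A^G$: it lies in $\mathcal C^n(G,A^G)$ and $\delta^nD^na=0$.
   Context: Right action: $a\mapsto a^g$, $a^{\mathbf e}=a$, $(a^g)^h=a^{gh}$, additive in $a$; $\mathbf e$ the identity. $A^G=\{a:a^g=a\ \forall g\}$. $\mathcal C^0(G,M)=M$; for $n\ge1$, $\mathcal C^n(G,M)$ is the group of functions $G^n\to M$ vanishing whenever some argument is $\mathbf e$. For $n\ge1$, $(d_nc)(g_1,\dots,g_n)=[c(g_1,\dots,g_{n-1})]^{g_n}-c(g_1,\dots,g_{n-1})$; $D^0=\mathrm{id}_A$, $D^n=d_nD^{n-1}$; $\mathcal P_n(G,A)=\ker D^{n+1}$. Coboundary (trivial left action): $[\delta^nc](g_1,\dots,g_{n+1})=c(g_2,\dots,g_{n+1})+\sum_{i=1}^{n}(-1)^ic(g_1,\dots,g_ig_{i+1},\dots,g_{n+1})+(-1)^{n+1}c(g_1,\dots,g_n)$, with $\delta^0=0$. *)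

(* Defs.v *)
From mathcomp Require Import all_boot all_order all_algebra.
Set Implicit Arguments. Unset Strict Implicit. Unset Printing Implicit Defensive.
Import GRing.Theory.
Local Open Scope ring_scope.

Definition is_group (G : Type) (mul : G -> G -> G) (e : G) (inv : G -> G) : Prop :=
  [/\ forall x y z, mul x (mul y z) = mul (mul x y) z,
      forall x, mul e x = x,
      forall x, mul x e = x,
      forall x, mul (inv x) x = e &
      forall x, mul x (inv x) = e].

(* A right action a |-> a^g of G on the abelian group A by additive maps
   (hence by group automorphisms). *)
Definition is_right_action (G : Type) (mul : G -> G -> G) (e : G)
  (A : zmodType) (act : A -> G -> A) : Prop :=
  [/\ forall a, act a e = a,
      forall a g h, act (act a g) h = act a (mul g h) &
      forall g, forall a b, act (a + b) g = act a g + act b g].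

Definition fixed_pts (G : Type) (A : zmodType) (act : A -> G -> A) (a : A) : Prop :=
  forall g, act a g = a.

(* Elements of G^n are represented by sequences s with size s = n.
   D a s = (D^n a)(g_1,...,g_n) for s = [:: g_1; ...; g_n], where
   D^0 a = a and D^n a (g_1..g_n) = [D^{n-1} a (g_1..g_{n-1})]^{g_n} - D^{n-1} a (g_1..g_{n-1}). *)
Definition Dop (G : Type) (A : zmodType) (act : A -> G -> A) (a : A) (s : seq G) : A :=
  foldl (fun x g => act x g - x) a s.

Definition Pn (G : Type) (A : zmodType) (act : A -> G -> A) (n : nat) (a : A) : Prop :=
  forall s : seq G, size s = n.+1 -> Dop act a s = 0.

Definition in_Cn (G : Type) (e : G) (A : zmodType) (act : A -> G -> A)
  (n : nat) (c : seq G -> A) : Prop :=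
  (forall s : seq G, size s = n -> fixed_pts act (c s)) /\
  ((0 < n)%N ->
   forall s : seq G, size s = n -> (exists2 i, (i < n)%N & nth e s i = e) -> c s = 0).

Definition sgnr (A : zmodType) (k : nat) (x : A) : A := if odd k then - x else x.

(* s with its entries i and i+1 (0-indexed) replaced by their product *)
Definition merge_at (G : Type) (mul : G -> G -> G) (e : G) (i : nat) (s : seq G) : seq G :=
  take i s ++ mul (nth e s i) (nth e s i.+1) :: drop i.+2 s.

(* Coboundary with trivial left action, evaluated at s = [:: g_1; ...; g_{n+1}]:
   c(g_2..g_{n+1}) + sum_{i=1}^n (-1)^i c(g_1,..,g_i g_{i+1},..,g_{n+1})
   + (-1)^{n+1} c(g_1..g_n). *)
Definition coboundary (G : Type) (mul : G -> G -> G) (e : G) (A : zmodType)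
  (n : nat) (c : seq G -> A) (s : seq G) : A :=
  c (behead s)
  + \sum_(i < n) sgnr i.+1 (c (merge_at mul e i s))
  + sgnr n.+1 (c (take n s)).

(* Main.v *)
Require Import Defs.
From mathcomp Require Import all_boot all_order all_algebra.
Local Open Scope ring_scope.
Import GRing.Theory.

Section Aux.
Variables (G : Type) (mul : G -> G -> G) (e : G) (A : zmodType) (act : A -> G -> A).
Hypothesis Hact : is_right_action mul e act.

Lemma act0 g : act 0 g = 0.
Proof.
case: Hact => _ _ Hadd.
have H := Hadd g 0 0; rewrite addr0 in H.
by apply: (addrI (act 0 g)); rewrite addr0 -H.
Qed.

Lemma actB x y g : act (x - y) g = act x g - act y g.
Proof.
case: Hact => _ _ Hadd.
have HN : act (- y) g = - act y g.
  apply/eqP; rewrite -subr_eq0 opprK -Hadd addrC subrr act0 //.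
by rewrite Hadd HN.
Qed.

Lemma actD x y g : act (x + y) g = act x g + act y g.
Proof. by case: Hact => _ _ ->. Qed.

Lemma Dop0 t : Dop act 0 t = 0.
Proof.
rewrite /Dop; elim: t => [|g t IH] //=; by rewrite act0 subr0.
Qed.

Lemma DopD x y t : Dop act (x + y) t = Dop act x t + Dop act y t.
Proof.
rewrite /Dop; elim: t x y => [|g t IH] x y //=.
rewrite actD -IH; congr foldl.
by rewrite opprD addrACA.
Qed.

Lemma Dop_cat x u v : Dop act x (u ++ v) = Dop act (Dop act x u) v.
Proof. by rewrite /Dop foldl_cat. Qed.

Lemma Dop_cons x g v : Dop act x (g :: v) = Dop act (act x g - x) v.
Proof. by []. Qed.

Lemma Dop_merge x u v g h :
  Dop act x (u ++ mul g h :: v) =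
  Dop act x (u ++ g :: v) + Dop act x (u ++ h :: v) + Dop act x (u ++ g :: h :: v).
Proof.
rewrite !Dop_cat !Dop_cons; set y := Dop act x u.
case: Hact => _ Hcomp _.
rewrite -!DopD; congr Dop.
rewrite actB Hcomp.
set p := act y (mul g h); set q := act y g; set r := act y h.
rewrite (addrC (q - y)) -addrA (addrC (q - y)) addrNK.
by rewrite addrC addrA subrK.
Qed.
End Aux.

Lemma telesc (A : zmodType) (O : nat -> A) n :
  O 0%N + \sum_(i < n) sgnr i.+1 (O i.+1 + O i) = sgnr n (O n).
Proof.
elim: n => [|n IH]; first by rewrite big_ord0 addr0.
rewrite big_ord_recr /= addrA IH /sgnr /=.
case: (odd n) => /=.
  by rewrite addrC addrK.
by rewrite opprD addrCA subrr addr0.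
Qed.

Theorem corollary1p22 (G : Type) (mul : G -> G -> G) (e : G) (inv : G -> G)
  (A : zmodType) (act : A -> G -> A) (n : nat) (a : A) :
  is_group mul e inv ->
  is_right_action mul e act ->
  (0 < n)%N ->
  Pn act n a ->
  in_Cn e act n (Dop act a) /\
  (forall s : seq G, size s = n.+1 -> coboundary mul e n (Dop act a) s = 0).
Proof.
move=> _ Hact n0 HP; split; first split.
- move=> s Hs g; have := HP (rcons s g); rewrite size_rcons Hs => /(_ erefl).
  rewrite -cats1 Dop_cat /= => /eqP; rewrite subr_eq0 => /eqP; done.
- move=> _ s Hs [i Hi Hei].
  rewrite -(cat_take_drop i s) (drop_nth e) ?Hs // Hei Dop_cat Dop_cons.
  case: (Hact) => -> _ _; by rewrite subrr (@Dop0 _ _ _ _ _ Hact).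
move=> s Hs.
pose O j := Dop act a (take j s ++ drop j.+1 s).
have Hm : forall i : 'I_n, Dop act a (merge_at mul e i s) = O i.+1 + O i.
  move=> i; have Hi : (i < n)%N := ltn_ord i.
  rewrite /merge_at (@Dop_merge _ _ _ _ _ Hact).
  have Hi1 : (i.+1 < size s)%N by rewrite Hs ltnS.
  have Hi0 : (i < size s)%N by rewrite Hs ltnS ltnW.
  have Es : s = take i s ++ nth e s i :: nth e s i.+1 :: drop i.+2 s.
    by rewrite -(drop_nth e Hi1) -(drop_nth e Hi0) cat_take_drop.
  have F : Dop act a (take i s ++ nth e s i :: nth e s i.+1 :: drop i.+2 s) = 0.
    by rewrite -Es HP.
  rewrite F addr0 /O; congr (_ + _); congr (Dop act a _).
  + by rewrite (take_nth e Hi0) -cats1 -catA.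
  + by rewrite (drop_nth e Hi1).
rewrite /coboundary (eq_bigr (fun i : 'I_n => sgnr i.+1 (O i.+1 + O i))); last first.
  by move=> i _; rewrite Hm.
have -> : Dop act a (behead s) = O 0%N by rewrite /O take0 /=; case: (s) => [|? ?] //=; rewrite drop0.
rewrite telesc.
have -> : Dop act a (take n s) = O n by rewrite /O drop_oversize ?cats0 ?Hs.
rewrite /sgnr /=; by case: (odd n) => /=; rewrite ?addNr ?subrr.
Qed.
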